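(* Let $(V_n)_{n\ge1}$ be a sequence in $\mathcal{V}$ with $M:=\limsup_{n\to\infty}\mathcal{L}_{V_n}(0)>0$. Then $(\mathcal{L}_{V_n})_{n\ge1}$ has a pre-cutoff if and only if $(\mathcal{L}_{V_n})_{n\ge1}$ has a cutoff.
   Context: $\mathcal{V}$ denotes the class of all non-decreasing, right-continuous functions $V:(0,\infty)\to\mathbb{R}$ with $\lim_{\lambda\to0^+}V(\lambda)=0$ and $\lim_{\lambda\to\infty}V(\lambda)<\infty$; for $V\in\mathcal{V}$, $\mathcal{L}_V(t)=\int_{(0,\infty)}e^{-t\lambda}dV(\lambda)$ ($t\ge0$, Lebesgue–Stieltjes integral). With $M=\limsup_n\mathcal{L}_{V_n}(0)>0$: the sequence $(\mathcal{L}_{V_n})$ has a pre-cutoff if there exist $t_n>0$ and constants $0<A<B$ with $\lim_n\mathcal{L}_{V_n}(Bt_n)=0$ and $\liminf_n\mathcal{L}_{V_n}(At_n)>0$; it has a cutoff if there exist $t_n>0$ with $\lim_n\mathcal{L}_{V_n}(at_n)=0$ for all $a>1$ and $\lim_n\mathcal{L}_{V_n}(at_n)=M$ for all $0<a<1$ (such $t_n$ is a cutoff time). *)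

(* Defs.v *)
From Stdlib Require Import Reals Lra ClassicalEpsilon.
Open Scope R_scope.

(** The class V: functions on (0,oo) (values outside (0,oo) are irrelevant). *)
Definition in_classV (V : R -> R) : Prop :=
  (forall x y, 0 < x -> x <= y -> V x <= V y) /\
  (forall x, 0 < x -> forall eps, 0 < eps ->
      exists d, 0 < d /\ forall y, x <= y < x + d -> Rabs (V y - V x) < eps) /\
  (forall eps, 0 < eps -> exists d, 0 < d /\ forall y, 0 < y < d -> Rabs (V y) < eps) /\
  (exists l, forall eps, 0 < eps -> exists B, forall y, B < y -> Rabs (V y - l) < eps).

Fixpoint RS_sum (f V : R -> R) (x xi : nat -> R) (n : nat) : R :=
  match n with
  | O => 0
  | S k => RS_sum f V x xi k + f (xi k) * (V (x (S k)) - V (x k))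
  end.

Definition tagged_partition (a b : R) (x xi : nat -> R) (n : nat) : Prop :=
  x O = a /\ x n = b /\ forall i, (i < n)%nat -> x i <= xi i <= x (S i).

(** Riemann–Stieltjes integral of f against dV over [a,b] (= LS integral over (a,b]
    for continuous f and right-continuous nondecreasing V). *)
Definition is_RS_integral (f V : R -> R) (a b I : R) : Prop :=
  forall eps, 0 < eps -> exists delta, 0 < delta /\
    forall n x xi, tagged_partition a b x xi n ->
      (forall i, (i < n)%nat -> x (S i) - x i < delta) ->
      Rabs (RS_sum f V x xi n - I) < eps.

Definition is_LS_integral_pos (f V : R -> R) (I : R) : Prop :=
  forall eps, 0 < eps -> exists d B, 0 < d /\
    forall a b, 0 < a < d -> B < b -> a < b ->
      exists I', is_RS_integral f V a b I' /\ Rabs (I' - I) < eps.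

Definition laplace (V : R -> R) (t : R) : R :=
  epsilon (inhabits 0) (is_LS_integral_pos (fun l => exp (- (t * l))) V).

(** Extended reals, for limsup (which may be +oo). *)
Inductive ER : Type := Fin (r : R) | PInf | MInf.

Definition is_limsup (u : nat -> R) (M : ER) : Prop :=
  match M with
  | Fin l => forall eps, 0 < eps ->
      (forall N, exists n, (N <= n)%nat /\ l - eps < u n) /\
      (exists N, forall n, (N <= n)%nat -> u n < l + eps)
  | PInf => forall K N, exists n, (N <= n)%nat /\ K < u n
  | MInf => forall K, exists N, forall n, (N <= n)%nat -> u n < K
  end.

Definition ER_pos (M : ER) : Prop :=
  match M with Fin l => 0 < l | PInf => True | MInf => False end.

Definition tends_to (u : nat -> R) (M : ER) : Prop :=
  match M with
  | Fin l => Un_cv u l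
  | PInf => forall K, exists N, forall n, (N <= n)%nat -> K < u n
  | MInf => forall K, exists N, forall n, (N <= n)%nat -> u n < K
  end.

Definition liminf_pos (u : nat -> R) : Prop :=
  exists c, 0 < c /\ exists N, forall n, (N <= n)%nat -> c < u n.

Definition has_precutoff (V : nat -> R -> R) : Prop :=
  exists t : nat -> R, (forall n, 0 < t n) /\
    exists A B, 0 < A /\ A < B /\
      Un_cv (fun n => laplace (V n) (B * t n)) 0 /\
      liminf_pos (fun n => laplace (V n) (A * t n)).

Definition has_cutoff (V : nat -> R -> R) (M : ER) : Prop :=
  exists t : nat -> R, (forall n, 0 < t n) /\
    (forall a, 1 < a -> Un_cv (fun n => laplace (V n) (a * t n)) 0) /\
    (forall a, 0 < a < 1 -> tends_to (fun n => laplace (V n) (a * t n)) M).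

(* Main.v *)
Require Import Defs.
From Stdlib Require Import Reals.
From Stdlib Require Import Lra Lia ClassicalEpsilon Classical.
Open Scope R_scope.


Definition fexp (t : R) := fun l : R => exp (- (t * l)).

Lemma exp_le_mono x y : x <= y -> exp x <= exp y.
Proof. intros [H|H]. left; apply exp_increasing; auto. subst; lra. Qed.

Lemma fexp_bnd t u : 0 <= t -> 0 <= u -> 0 < fexp t u <= 1.
Proof. intros. unfold fexp. split. apply exp_pos. rewrite <- exp_0. apply exp_le_mono.
  assert (0 <= t * u) by (apply Rmult_le_pos; auto). lra. Qed.

Lemma fexp_dec t u v : 0 <= t -> u <= v -> fexp t v <= fexp t u.
Proof. intros. unfold fexp. apply exp_le_mono.
  assert (t * u <= t * v) by (apply Rmult_le_compat_l; auto). lra. Qed.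

Lemma fexp_lip t u v : 0 <= t -> 0 <= u <= v -> fexp t u - fexp t v <= t * (v - u).
Proof. intros Ht Huv. unfold fexp.
  replace (-(t*v)) with (-(t*u) + -(t*(v-u))) by ring. rewrite exp_plus.
  pose proof (exp_ineq1_le (-(t*(v-u)))).
  pose proof (fexp_bnd t u Ht ltac:(lra)). unfold fexp in H0.
  assert (0 <= t * (v - u)) by (apply Rmult_le_pos; lra).
  set (e1 := exp (- (t*u))) in *. set (e2 := exp (-(t*(v-u)))) in *.
  assert (e1 * (1 - e2) <= e1 * (t*(v-u))) by (apply Rmult_le_compat_l; lra).
  assert (e1 * (t*(v-u)) <= 1 * (t*(v-u))) by (apply Rmult_le_compat_r; lra).
  lra. Qed.

Lemma fexp_tmono s t u : 0 <= s <= t -> 0 <= u -> fexp t u <= fexp s u.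
Proof. intros. unfold fexp. apply exp_le_mono.
  assert (s * u <= t * u) by (apply Rmult_le_compat_r; lra). lra. Qed.

Lemma fexp_mid x z u : fexp ((x+z)/2) u ^ 2 = fexp x u * fexp z u.
Proof. unfold fexp. rewrite <- exp_plus. simpl. rewrite Rmult_1_r, <- exp_plus.
  f_equal. field. Qed.

Definition Usum f V x n := RS_sum f V x x n.
Definition Lsum f V (x : nat -> R) n := RS_sum f V x (fun i => x (S i)) n.
Definition steps (x : nat -> R) n := forall i, (i < n)%nat -> x i <= x (S i).
Definition part (a b : R) (x : nat -> R) (n : nat) : Prop :=
  x O = a /\ x n = b /\ steps x n.
Definition fine (x : nat -> R) n d := forall i, (i < n)%nat -> x (S i) - x i < d.
Definition Vmono (V : R -> R) := forall x y, 0 < x -> x <= y -> V x <= V y.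
Definition fdec (f : R -> R) := forall u v, 0 < u <= v -> f v <= f u.
Definition flip (f : R -> R) K := forall u v, 0 < u <= v -> f u - f v <= K * (v - u).

Lemma steps_mono x n : steps x n -> forall i j, (i <= j <= n)%nat -> x i <= x j.
Proof. intros Hs i j [Hij Hjn]. revert Hjn. induction Hij; intros. lra.
  apply Rle_trans with (x m). apply IHHij; lia. apply Hs; lia. Qed.

Lemma part_bnd a b x n : part a b x n -> forall i, (i <= n)%nat -> a <= x i <= b.
Proof. intros [H0 [Hn Hs]] i Hi. rewrite <- H0, <- Hn. split; apply (steps_mono x n Hs); lia. Qed.

Lemma steps_weak x n : steps x (S n) -> steps x n.
Proof. intros H i Hi. apply H; lia. Qed.

Lemma RS_ext f1 f2 V1 V2 x1 x2 xi1 xi2 n :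
  (forall i, (i < n)%nat -> f1 (xi1 i) * (V1 (x1 (S i)) - V1 (x1 i)) = f2 (xi2 i) * (V2 (x2 (S i)) - V2 (x2 i))) ->
  RS_sum f1 V1 x1 xi1 n = RS_sum f2 V2 x2 xi2 n.
Proof. induction n; intros H; simpl. auto. rewrite IHn. rewrite H. auto. lia. intros; apply H; lia. Qed.

Lemma RS_le f1 f2 V1 V2 x1 x2 xi1 xi2 n :
  (forall i, (i < n)%nat -> f1 (xi1 i) * (V1 (x1 (S i)) - V1 (x1 i)) <= f2 (xi2 i) * (V2 (x2 (S i)) - V2 (x2 i))) ->
  RS_sum f1 V1 x1 xi1 n <= RS_sum f2 V2 x2 xi2 n.
Proof. induction n; intros H; simpl. lra. apply Rplus_le_compat. apply IHn. intros; apply H; lia. apply H; lia. Qed.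

Lemma UL_gap f V x n K d : 0 <= K -> Vmono V -> flip f K ->
  (forall i, (i < n)%nat -> 0 < x i <= x (S i) /\ x (S i) - x i < d) ->
  Usum f V x n - Lsum f V x n <= K * d * (V (x n) - V (x O)).
Proof. intros HK HV Hf. induction n; intros H; unfold Usum, Lsum in *; simpl.
  lra.
  assert (IH := IHn ltac:(intros; apply H; lia)).
  destruct (H n ltac:(lia)) as [[h1 h2] h3].
  assert (hv : 0 <= V (x (S n)) - V (x n)) by (assert (V (x n) <= V (x (S n))) by (apply HV; lra); lra).
  pose proof (Hf (x n) (x (S n)) ltac:(lra)).
  assert ((f (x n) - f (x (S n))) * (V (x (S n)) - V (x n)) <= K * (x (S n) - x n) * (V (x (S n)) - V (x n))) by (apply Rmult_le_compat_r; lra).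
  assert (K * (x (S n) - x n) * (V (x (S n)) - V (x n)) <= K * d * (V (x (S n)) - V (x n))).
  { apply Rmult_le_compat_r; auto. apply Rmult_le_compat_l; lra. }
  lra. Qed.

Lemma LRS f V a b x xi n : 0 < a -> Vmono V -> fdec f -> tagged_partition a b x xi n ->
  Lsum f V x n <= RS_sum f V x xi n <= Usum f V x n.
Proof. intros Ha HV Hf [H0 [Hn Ht]].
  assert (Hs : steps x n) by (intros i Hi; specialize (Ht i Hi); lra).
  assert (Hb := part_bnd a b x n (conj H0 (conj Hn Hs))).
  split; apply RS_le; intros i Hi; specialize (Ht i Hi); pose proof (Hb i ltac:(lia));
  (assert (0 <= V (x (S i)) - V (x i)) by (assert (V (x i) <= V (x (S i))) by (apply HV; lra); lra));
  apply Rmult_le_compat_r; auto; apply Hf; lra. Qed.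

Definition Ux f V x n z := RS_sum f (fun u => V (Rmin u z)) x x n.

Lemma K1a f V x n : Vmono V -> fdec f -> steps x n -> 0 < x O ->
  forall z w, x O <= z <= w ->
  f w * (V (Rmin (x n) w) - V (Rmin (x n) z)) <= Ux f V x n w - Ux f V x n z.
Proof. intros HV Hf. induction n; intros Hs H0 z w Hzw; unfold Ux in *; simpl.
  - rewrite Rmin_left by lra. rewrite Rmin_left by lra. lra.
  - assert (IH := IHn (steps_weak _ _ Hs) H0 z w Hzw).
    assert (hx : x O <= x n) by (apply (steps_mono x (S n) Hs); lia).
    assert (hxs : x n <= x (S n)) by (apply Hs; lia).
    destruct (Rle_dec w (x n)) as [Hw|Hw].
    + rewrite (Rmin_right (x n) w), (Rmin_right (x (S n)) w), (Rmin_right (x n) z), (Rmin_right (x (S n)) z) in * by lra.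
      lra.
    + assert (hf : f w <= f (x n)) by (apply Hf; lra).
      assert (hD : 0 <= V (Rmin (x (S n)) w) - V (Rmin (x n) w) - (V (Rmin (x (S n)) z) - V (Rmin (x n) z))).
      { rewrite (Rmin_left (x n) w) by lra.
        destruct (Rle_dec z (x n)).
        - rewrite (Rmin_right (x n) z), (Rmin_right (x (S n)) z) by lra.
          assert (V (x n) <= V (Rmin (x (S n)) w)). { apply HV. lra. apply Rmin_glb; lra. }
          lra.
        - rewrite (Rmin_left (x n) z) by lra.
          assert (V (Rmin (x (S n)) z) <= V (Rmin (x (S n)) w)).
          { apply HV. apply Rmin_glb_lt; lra. unfold Rmin; repeat destruct Rle_dec; lra. }
          lra. }
      assert (f w * (V (Rmin (x (S n)) w) - V (Rmin (x n) w) - (V (Rmin (x (S n)) z) - V (Rmin (x n) z)))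
        <= f (x n) * (V (Rmin (x (S n)) w) - V (Rmin (x n) w) - (V (Rmin (x (S n)) z) - V (Rmin (x n) z))))
        by (apply Rmult_le_compat_r; auto).
      lra.
Qed.

Lemma K1b f V x n y m : Vmono V -> fdec f -> steps x n -> 0 < x O -> steps y m ->
  x O <= y O -> y m <= x n ->
  Lsum f V y m <= Ux f V x n (y m) - Ux f V x n (y O).
Proof. intros HV Hf Hx H0. induction m; intros Hy Hy0 Hym; unfold Lsum in *; simpl.
  lra.
  assert (h1 : y m <= y (S m)) by (apply Hy; lia).
  assert (h2 : y O <= y m) by (apply (steps_mono y (S m) Hy); lia).
  assert (IH := IHm (steps_weak _ _ Hy) Hy0 ltac:(lra)).
  assert (K := K1a f V x n HV Hf Hx H0 (y m) (y (S m)) ltac:(lra)).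
  rewrite (Rmin_right (x n) (y (S m))), (Rmin_right (x n) (y m)) in K by lra.
  lra. Qed.

Lemma Ux_top f V x n : steps x n -> Ux f V x n (x n) = Usum f V x n.
Proof. intros Hs. unfold Ux, Usum. apply RS_ext. intros i Hi.
  rewrite (Rmin_left (x (S i))), (Rmin_left (x i)); auto; apply (steps_mono x n Hs); lia. Qed.

Lemma Ux_bot f V x n : steps x n -> Ux f V x n (x O) = 0.
Proof. intros Hs. unfold Ux. induction n; simpl. auto.
  rewrite IHn by (apply steps_weak; auto).
  rewrite (Rmin_right (x (S n))), (Rmin_right (x n)); try (apply (steps_mono x (S n) Hs); lia). ring. Qed.

Lemma K1 f V a b x n y m : 0 < a -> Vmono V -> fdec f -> part a b x n -> part a b y m ->
  Lsum f V y m <= Usum f V x n.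
Proof. intros Ha HV Hf [hx0 [hxn hxs]] [hy0 [hym hys]].
  pose proof (K1b f V x n y m HV Hf hxs ltac:(lra) hys ltac:(lra) ltac:(lra)).
  rewrite hym, <- hxn, Ux_top in H by auto. rewrite hy0, <- hx0, Ux_bot in H by auto. lra. Qed.

Definition SW f V a b I := (forall y m, part a b y m -> Lsum f V y m <= I) /\
  (forall x n, part a b x n -> I <= Usum f V x n).

Definition triv (a b : R) := fun i : nat => match i with O => a | S _ => b end.
Lemma triv_part a b : a <= b -> part a b (triv a b) 1.
Proof. intros. split; [|split]; auto. intros i Hi. destruct i; simpl; [lra|lia]. Qed.

Lemma SW_ex f V a b : 0 < a -> a <= b -> Vmono V -> fdec f -> exists I, SW f V a b I.
Proof. intros Ha Hab HV Hf.
  set (E := fun s => exists y m, part a b y m /\ s = Lsum f V y m).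
  assert (HE : bound E).
  { exists (Usum f V (triv a b) 1). intros s [y [m [Hp ->]]]. eapply K1; eauto. apply triv_part; auto. }
  assert (HE2 : exists s, E s) by (exists (Lsum f V (triv a b) 1); exists (triv a b), 1%nat; split; auto; apply triv_part; auto).
  destruct (completeness E HE HE2) as [I [Hub Hlub]].
  exists I. split.
  - intros y m Hp. apply Hub. exists y, m; auto.
  - intros x n Hp. apply Hlub. intros s [y [m [Hq ->]]]. eapply K1; eauto.
Qed.

Lemma fine_ex a b d : a <= b -> 0 < d -> exists x n, part a b x n /\ fine x n d.
Proof. intros Hab Hd.
  destruct (archimed_cor1 (d / (b - a + 1))) as [N [HN HN0]].
  { apply Rdiv_lt_0_compat; lra. }
  assert (hN : 0 < INR N) by (apply lt_0_INR; auto).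
  exists (fun i => a + INR i * ((b - a) / INR N)), N. split; [split; [|split]|].
  - simpl. ring.
  - field. lra.
  - intros i Hi. rewrite S_INR. assert (0 <= (b - a) / INR N) by (unfold Rdiv; apply Rmult_le_pos; [lra | left; apply Rinv_0_lt_compat; auto]). lra.
  - intros i Hi. rewrite S_INR.
    replace (a + (INR i + 1) * ((b - a) / INR N) - (a + INR i * ((b - a) / INR N))) with ((b-a) * / INR N) by (field; lra).
    assert (0 < / INR N) by (apply Rinv_0_lt_compat; auto).
    assert ((b - a) * / INR N < (b - a + 1) * / INR N) by (apply Rmult_lt_compat_r; lra).
    assert ((b - a + 1) * / INR N < (b - a + 1) * (d / (b - a + 1))) by (apply Rmult_lt_compat_l; lra).
    replace ((b - a + 1) * (d / (b - a + 1))) with d in H1 by (field; lra). lra.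
Qed.

Lemma eps_le u v C : 0 <= C -> (forall d, 0 < d -> u <= v + C * d) -> u <= v.
Proof. intros HC H. apply Rle_plus_epsilon. intros e He.
  specialize (H (e / (C + 1)) ltac:(apply Rdiv_lt_0_compat; lra)).
  assert (C * (e / (C + 1)) <= e).
  { replace e with ((C+1) * (e / (C+1))) at 2 by (field; lra).
    apply Rmult_le_compat_r. left; apply Rdiv_lt_0_compat; lra. lra. }
  lra. Qed.

Lemma V_part V a b x n : Vmono V -> 0 < a -> part a b x n -> 0 <= V b - V a.
Proof. intros HV Ha Hp. destruct Hp as [h0 [hn hs]].
  assert (x O <= x n) by (apply (steps_mono x n hs); lia).
  assert (V a <= V b) by (apply HV; lra). lra. Qed.

Lemma SW_close f V a b I K x n d : 0 < a -> Vmono V -> fdec f -> flip f K -> 0 <= K ->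
  SW f V a b I -> part a b x n -> fine x n d ->
  Lsum f V x n <= I <= Usum f V x n /\ Usum f V x n <= Lsum f V x n + K * d * (V b - V a).
Proof. intros Ha HV Hf Hl HK [H1 H2] Hp Hd.
  split. split; [apply H1 | apply H2]; auto.
  destruct Hp as [h0 [hn hs]] eqn:E.
  pose proof (UL_gap f V x n K d HK HV Hl).
  rewrite hn, h0 in H. enough (Usum f V x n - Lsum f V x n <= K * d * (V b - V a)) by lra.
  apply H. intros i Hi. split; [|apply Hd; auto]. split; [|apply hs; auto].
  pose proof (part_bnd a b x n Hp i ltac:(lia)). lra. Qed.

Lemma SW_RS f V a b I K : 0 < a -> a <= b -> Vmono V -> fdec f -> flip f K -> 0 <= K ->
  SW f V a b I -> is_RS_integral f V a b I.
Proof. intros Ha Hab HV Hf Hl HK HS e He.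
  assert (hV : 0 <= V b - V a) by (apply (V_part V a b (triv a b) 1); auto; apply triv_part; auto).
  set (D := K * (V b - V a)). assert (0 <= D) by (apply Rmult_le_pos; auto).
  exists (e / (D + 1)). split. apply Rdiv_lt_0_compat; lra.
  intros n x xi Htp Hd.
  assert (Hp : part a b x n).
  { destruct Htp as [h0 [hn ht]]. split; auto. split; auto. intros i Hi; specialize (ht i Hi); lra. }
  destruct (SW_close f V a b I K x n (e / (D+1)) Ha HV Hf Hl HK HS Hp Hd) as [[h1 h2] h3].
  destruct (LRS f V a b x xi n Ha HV Hf Htp) as [h4 h5].
  assert (K * (e / (D + 1)) * (V b - V a) < e).
  { replace (K * (e / (D + 1)) * (V b - V a)) with (D * (e / (D+1))) by (unfold D; ring).
    replace e with ((D+1) * (e / (D+1))) at 2 by (field; lra).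
    apply Rmult_lt_compat_r. apply Rdiv_lt_0_compat; lra. lra. }
  apply Rabs_def1; lra. Qed.

Lemma RS_unique f V a b I1 I2 : a <= b -> is_RS_integral f V a b I1 -> is_RS_integral f V a b I2 -> I1 = I2.
Proof. intros Hab H1 H2.
  destruct (Rle_dec (Rabs (I1 - I2)) 0) as [h|h].
  { pose proof (Rabs_pos (I1 - I2)). assert (Rabs (I1 - I2) = 0) by lra.
    destruct (Rle_dec I1 I2). rewrite Rabs_left1 in H0 by lra. lra. rewrite Rabs_right in H0 by lra. lra. }
  exfalso. set (e := Rabs (I1 - I2) / 2).
  assert (He : 0 < e) by (unfold e; lra).
  destruct (H1 e He) as [d1 [hd1 K1]]. destruct (H2 e He) as [d2 [hd2 K2]].
  destruct (fine_ex a b (Rmin d1 d2) Hab ltac:(apply Rmin_glb_lt; auto)) as [x [n [[h0 [hn hs]] Hf]]].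
  assert (Htp : tagged_partition a b x x n) by (split; auto; split; auto; intros i Hi; specialize (hs i Hi); lra).
  specialize (K1 n x x Htp ltac:(intros i Hi; specialize (Hf i Hi); pose proof (Rmin_l d1 d2); lra)).
  specialize (K2 n x x Htp ltac:(intros i Hi; specialize (Hf i Hi); pose proof (Rmin_r d1 d2); lra)).
  unfold e in *. revert K1 K2. set (S := RS_sum f V x x n). unfold Rabs; repeat destruct Rcase_abs; lra.
Qed.

Lemma key_ineq A B C P Q R : 0 <= B -> 0 <= C -> 0 <= Q -> 0 <= R -> A^2 <= B * C -> P^2 = Q * R ->
  2 * A * P <= B * R + C * Q.
Proof. intros. assert (h : (2 * A * P)^2 <= (B * R + C * Q)^2).
  { assert ((2*A*P)^2 = 4 * A^2 * P^2) by ring. rewrite H5, H4.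
    assert (4 * A^2 * (Q*R) <= 4 * (B*C) * (Q*R)).
    { apply Rmult_le_compat_r. apply Rmult_le_pos; auto. lra. }
    assert (0 <= (B*R - C*Q)^2) by (apply pow2_ge_0). nra. }
  assert (0 <= B * R + C * Q) by (assert (0 <= B*R) by (apply Rmult_le_pos; auto); assert (0 <= C*Q) by (apply Rmult_le_pos; auto); lra).
  nra. Qed.

Lemma RS_cs fx fy fz V x xi n :
  (forall i, (i < n)%nat -> 0 <= V (x (S i)) - V (x i) /\ 0 <= fx (xi i) /\ 0 <= fz (xi i) /\ fy (xi i) ^ 2 = fx (xi i) * fz (xi i)) ->
  0 <= RS_sum fx V x xi n /\ 0 <= RS_sum fz V x xi n /\ RS_sum fy V x xi n ^ 2 <= RS_sum fx V x xi n * RS_sum fz V x xi n.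
Proof. induction n; intros H; cbn [RS_sum]. simpl; lra.
  destruct (IHn ltac:(intros; apply H; lia)) as [hB [hC hA]].
  destruct (H n ltac:(lia)) as [hw [hQ [hR hP]]].
  set (A := RS_sum fy V x xi n) in *. set (B := RS_sum fx V x xi n) in *. set (C := RS_sum fz V x xi n) in *.
  set (w := V (x (S n)) - V (x n)) in *. set (P := fy (xi n)) in *. set (Q := fx (xi n)) in *. set (R := fz (xi n)) in *.
  pose proof (key_ineq A B C P Q R hB hC hQ hR hA hP).
  split. assert (0 <= Q * w) by (apply Rmult_le_pos; auto). lra.
  split. assert (0 <= R * w) by (apply Rmult_le_pos; auto). lra.
  assert (w * (2 * A * P) <= w * (B * R + C * Q)) by (apply Rmult_le_compat_l; auto).
  assert ((A + P * w)^2 = A^2 + w * (2*A*P) + P^2 * w^2) by ring.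
  assert ((B + Q * w) * (C + R * w) = B * C + w * (B*R + C*Q) + (Q*R) * w^2) by ring.
  rewrite H2, H3, hP. lra. Qed.

Lemma approx3 P Q R : (forall e, 0 < e -> exists p q r, Rabs (p - P) < e /\ Rabs (q - Q) < e /\ Rabs (r - R) < e /\ p * p <= q * r) ->
  P * P <= Q * R.
Proof. intros H. destruct (Rle_dec (P*P) (Q*R)) as [h|h]; auto. exfalso.
  set (D := P*P - Q*R). assert (hD : 0 < D) by (unfold D; lra).
  set (C := 2 * Rabs P + Rabs Q + Rabs R + 3).
  assert (hC : 0 < C) by (unfold C; pose proof (Rabs_pos P); pose proof (Rabs_pos Q); pose proof (Rabs_pos R); lra).
  set (e := Rmin 1 (D / (2 * C))).
  assert (he : 0 < e) by (apply Rmin_glb_lt; [lra | apply Rdiv_lt_0_compat; lra]).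
  assert (he1 : e <= 1) by apply Rmin_l.
  assert (heC : e * C <= D / 2).
  { assert (e <= D / (2 * C)) by apply Rmin_r.
    replace (D/2) with ((D / (2 * C)) * C) by (field; lra). apply Rmult_le_compat_r; lra. }
  destruct (H e he) as [p [q [r [hp [hq [hr hpqr]]]]]].
  set (u := p - P) in *. set (v := q - Q) in *. set (w := r - R) in *.
  assert (hu : Rabs u <= e) by lra. assert (hv : Rabs v <= e) by lra. assert (hw : Rabs w <= e) by lra.
  assert (e1 : - (Rabs P * e) <= P * u).
  { assert (Rabs (P * u) <= Rabs P * e) by (rewrite Rabs_mult; apply Rmult_le_compat_l; auto; apply Rabs_pos).
    pose proof (Rle_abs (- (P * u))). rewrite Rabs_Ropp in H1. lra. }
  assert (e2 : Q * w <= Rabs Q * e).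
  { assert (Rabs (Q * w) <= Rabs Q * e) by (rewrite Rabs_mult; apply Rmult_le_compat_l; auto; apply Rabs_pos).
    pose proof (Rle_abs (Q * w)). lra. }
  assert (e3 : v * R <= Rabs R * e).
  { assert (Rabs (v * R) <= Rabs R * e) by (rewrite Rabs_mult, Rmult_comm; apply Rmult_le_compat_l; auto; apply Rabs_pos).
    pose proof (Rle_abs (v * R)). lra. }
  assert (e4 : v * w <= e).
  { assert (Rabs (v * w) <= e * 1) by (rewrite Rabs_mult; apply Rmult_le_compat; auto; try apply Rabs_pos; lra).
    pose proof (Rle_abs (v * w)). lra. }
  assert (e5 : 0 <= u * u) by nra.
  assert (p = P + u) by (unfold u; ring). assert (q = Q + v) by (unfold v; ring). assert (r = R + w) by (unfold w; ring).
  rewrite H0, H1, H2 in hpqr.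
  assert (eC : e * C = 2 * (Rabs P * e) + Rabs Q * e + Rabs R * e + 3 * e) by (unfold C; ring).
  unfold D in *. nra. Qed.

Lemma fexp_fdec t : 0 <= t -> fdec (fexp t).
Proof. intros Ht u v Huv. apply fexp_dec; lra. Qed.
Lemma fexp_flip t : 0 <= t -> flip (fexp t) t.
Proof. intros Ht u v Huv. apply fexp_lip; lra. Qed.

Lemma dV_nonneg V a b x n i : Vmono V -> 0 < a -> part a b x n -> (i < n)%nat -> 0 <= V (x (S i)) - V (x i).
Proof. intros HV Ha Hp Hi. pose proof (part_bnd a b x n Hp i ltac:(lia)).
  destruct Hp as [_ [_ hs]]. specialize (hs i Hi). assert (V (x i) <= V (x (S i))) by (apply HV; lra). lra. Qed.

Lemma SW_nonneg t V a b I : 0 <= t -> 0 < a -> a <= b -> Vmono V -> SW (fexp t) V a b I -> 0 <= I.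
Proof. intros Ht Ha Hab HV [H1 _]. specialize (H1 _ _ (triv_part a b Hab)).
  unfold Lsum in H1. simpl in H1. pose proof (fexp_bnd t b Ht ltac:(lra)).
  assert (V a <= V b) by (apply HV; lra).
  assert (0 <= fexp t b * (V b - V a)) by (apply Rmult_le_pos; lra). lra. Qed.

Lemma SW_tmono s t V a b It Is : 0 <= s <= t -> 0 < a -> a <= b -> Vmono V ->
  SW (fexp t) V a b It -> SW (fexp s) V a b Is -> It <= Is.
Proof. intros Hst Ha Hab HV Ht Hs.
  assert (hV : 0 <= V b - V a) by (apply (V_part V a b (triv a b) 1); auto; apply triv_part; auto).
  apply (eps_le _ _ (s * (V b - V a))). apply Rmult_le_pos; lra.
  intros d Hd. destruct (fine_ex a b d Hab Hd) as [x [n [Hp Hf]]].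
  destruct (SW_close (fexp t) V a b It t x n d Ha HV (fexp_fdec t ltac:(lra)) (fexp_flip t ltac:(lra)) ltac:(lra) Ht Hp Hf) as [[h1 h2] h3].
  destruct (SW_close (fexp s) V a b Is s x n d Ha HV (fexp_fdec s ltac:(lra)) (fexp_flip s ltac:(lra)) ltac:(lra) Hs Hp Hf) as [[h4 h5] h6].
  assert (Usum (fexp t) V x n <= Usum (fexp s) V x n).
  { apply RS_le. intros i Hi. apply Rmult_le_compat_r. apply (dV_nonneg V a b x n i HV Ha Hp Hi).
    pose proof (part_bnd a b x n Hp i ltac:(lia)). apply (fexp_tmono s t (x i)); lra. }
  assert (s * d * (V b - V a) = s * (V b - V a) * d) by ring. lra. Qed.

Lemma SW_cs x z V a b Ix Iy Iz : 0 <= x -> 0 <= z -> 0 < a -> a <= b -> Vmono V ->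
  SW (fexp x) V a b Ix -> SW (fexp ((x+z)/2)) V a b Iy -> SW (fexp z) V a b Iz -> Iy * Iy <= Ix * Iz.
Proof. intros Hx Hz Ha Hab HV Sx Sy Sz.
  assert (hV : 0 <= V b - V a) by (apply (V_part V a b (triv a b) 1); auto; apply triv_part; auto).
  apply approx3. intros e He.
  set (d := e / ((x + z + 1) * (V b - V a + 1))).
  assert (hd : 0 < d) by (unfold d; apply Rdiv_lt_0_compat; [lra | apply Rmult_lt_0_compat; lra]).
  assert (hbound : forall t, 0 <= t <= x + z -> t * d * (V b - V a) < e).
  { intros t Ht. assert (t * d * (V b - V a) <= (x + z + 1) * d * (V b - V a)).
    { apply Rmult_le_compat_r. lra. apply Rmult_le_compat_r; lra. }
    assert ((x + z + 1) * d * (V b - V a) < (x + z + 1) * d * (V b - V a + 1)).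
    { apply Rmult_lt_compat_l. apply Rmult_lt_0_compat; lra. lra. }
    assert ((x + z + 1) * d * (V b - V a + 1) = e).
    { unfold d. field. split; lra. }
    lra. }
  destruct (fine_ex a b d Hab hd) as [p [n [Hp Hf]]].
  destruct (SW_close _ V a b Ix x p n d Ha HV (fexp_fdec x Hx) (fexp_flip x Hx) Hx Sx Hp Hf) as [[h1 h2] h3].
  destruct (SW_close _ V a b Iy ((x+z)/2) p n d Ha HV (fexp_fdec ((x+z)/2) ltac:(lra)) (fexp_flip ((x+z)/2) ltac:(lra)) ltac:(lra) Sy Hp Hf) as [[h4 h5] h6].
  destruct (SW_close _ V a b Iz z p n d Ha HV (fexp_fdec z Hz) (fexp_flip z Hz) Hz Sz Hp Hf) as [[h7 h8] h9].
  pose proof (hbound x ltac:(lra)). pose proof (hbound ((x+z)/2) ltac:(lra)). pose proof (hbound z ltac:(lra)).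
  exists (Usum (fexp ((x+z)/2)) V p n), (Usum (fexp x) V p n), (Usum (fexp z) V p n).
  split; [|split; [|split]]; try (apply Rabs_def1; lra).
  destruct (RS_cs (fexp x) (fexp ((x+z)/2)) (fexp z) V p p n) as [_ [_ hc]].
  { intros i Hi. pose proof (part_bnd a b p n Hp i ltac:(lia)).
    split. apply (dV_nonneg V a b p n i HV Ha Hp Hi).
    split. left; apply fexp_bnd; lra. split. left; apply fexp_bnd; lra. apply fexp_mid. }
  unfold Usum. simpl in hc. lra. Qed.

Lemma clamp_term f V a b u v : 0 < u <= v -> 0 < a <= b -> fdec f -> (forall w, 0 < w -> 0 <= f w) -> Vmono V ->
  f (Rmin (Rmax u a) b) * (V (Rmin (Rmax v a) b) - V (Rmin (Rmax u a) b)) <= f u * (V v - V u).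
Proof. intros Huv Hab Hf Hf0 HV.
  assert (hVuv : V u <= V v) by (apply HV; lra).
  assert (hfu : 0 <= f u) by (apply Hf0; lra).
  assert (0 <= f u * (V v - V u)) by (apply Rmult_le_pos; lra).
  destruct (Rle_dec v a).
  { rewrite (Rmax_right u a), (Rmax_right v a), (Rmin_left a b) by lra. lra. }
  destruct (Rle_dec b u).
  { rewrite (Rmax_left u a), (Rmax_left v a), (Rmin_right u b), (Rmin_right v b) by lra. lra. }
  rewrite (Rmax_left v a) by lra.
  set (cu := Rmin (Rmax u a) b). set (cv := Rmin v b).
  assert (hcu : u <= cu /\ a <= cu /\ cu <= b) by (unfold cu, Rmin, Rmax; repeat destruct Rle_dec; lra).
  assert (hcv : cv <= v /\ a <= cv /\ cv <= b /\ cu <= cv) by (unfold cu, cv, Rmin, Rmax in *; repeat destruct Rle_dec; lra).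
  assert (h1 : f cu <= f u) by (apply Hf; lra).
  assert (h2 : V cu <= V cv) by (apply HV; lra).
  assert (h3 : V u <= V cu) by (apply HV; lra).
  assert (h4 : V cv <= V v) by (apply HV; lra).
  assert (0 <= f cu) by (apply Hf0; lra).
  assert (f cu * (V cv - V cu) <= f u * (V cv - V cu)) by (apply Rmult_le_compat_r; lra).
  assert (f u * (V cv - V cu) <= f u * (V v - V u)) by (apply Rmult_le_compat_l; lra).
  lra. Qed.

Lemma SW_interval t V a b a' b' I I' : 0 <= t -> 0 < a' -> a' <= a -> a <= b -> b <= b' -> Vmono V ->
  SW (fexp t) V a b I -> SW (fexp t) V a' b' I' -> I <= I'.
Proof. intros Ht Ha' Ha Hab Hb HV S1 S2.
  apply (eps_le _ _ (t * (V b' - V a'))).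
  { apply Rmult_le_pos; auto. assert (V a' <= V b') by (apply HV; lra). lra. }
  intros d Hd. destruct (fine_ex a' b' d ltac:(lra) Hd) as [x [n [Hp Hf]]].
  destruct (SW_close _ V a' b' I' t x n d Ha' HV (fexp_fdec t Ht) (fexp_flip t Ht) Ht S2 Hp Hf) as [[h1 h2] h3].
  set (c := fun i => Rmin (Rmax (x i) a) b).
  assert (Hc : part a b c n).
  { destruct Hp as [h0 [hn hs]]. split; [|split].
    - unfold c. rewrite h0, Rmax_right, Rmin_left; lra.
    - unfold c. rewrite hn, Rmax_left, Rmin_right; lra.
    - intros i Hi. specialize (hs i Hi). unfold c, Rmin, Rmax; repeat destruct Rle_dec; lra. }
  destruct S1 as [_ S1]. specialize (S1 c n Hc).
  assert (Usum (fexp t) V c n <= Usum (fexp t) V x n).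
  { apply RS_le. intros i Hi. pose proof (part_bnd a' b' x n Hp i ltac:(lia)).
    destruct Hp as [_ [_ hs]]. specialize (hs i Hi). unfold c.
    apply clamp_term; try lra; auto. apply fexp_fdec; auto. intros w Hw; left; apply fexp_bnd; lra. }
  assert (t * d * (V b' - V a') = t * (V b' - V a') * d) by ring. lra. Qed.

Lemma classV_mono V : in_classV V -> Vmono V.
Proof. intros [H _]. exact H. Qed.

Lemma V_bound V : in_classV V -> exists C, forall a b, 0 < a -> a <= b -> V b - V a <= C.
Proof. intros [HV [_ [H0 [l Hl]]]].
  destruct (H0 1 ltac:(lra)) as [d [hd Hd]].
  exists (l + 1). intros a b Ha Hab.
  assert (hb : V b <= l).
  { destruct (Rle_dec (V b) l) as [h|h]; auto. exfalso.
    destruct (Hl (V b - l) ltac:(lra)) as [B0 HB].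
    specialize (HB (Rmax B0 b + 1) ltac:(pose proof (Rmax_l B0 b); lra)).
    assert (V b <= V (Rmax B0 b + 1)) by (apply HV; [lra | pose proof (Rmax_r B0 b); lra]).
    revert HB. unfold Rabs; destruct Rcase_abs; lra. }
  assert (ha : -1 <= V a).
  { set (y := Rmin a (d/2)). assert (0 < y) by (apply Rmin_glb_lt; lra).
    assert (y < d) by (unfold y; pose proof (Rmin_r a (d/2)); lra).
    specialize (Hd y ltac:(lra)). assert (V y <= V a) by (apply HV; auto; apply Rmin_l).
    revert Hd. unfold Rabs; destruct Rcase_abs; lra. }
  lra. Qed.

Lemma SW_bounded V t : in_classV V -> 0 <= t -> exists C, forall a b I, 0 < a -> a <= b -> SW (fexp t) V a b I -> I <= C.
Proof. intros HcV Ht. destruct (V_bound V HcV) as [C HC]. exists C. intros a b I Ha Hab [_ H2].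
  specialize (H2 _ _ (triv_part a b Hab)). unfold Usum in H2. simpl in H2.
  pose proof (fexp_bnd t a Ht ltac:(lra)). specialize (HC a b Ha Hab).
  assert (V a <= V b) by (apply (classV_mono V HcV); lra).
  assert (fexp t a * (V b - V a) <= 1 * (V b - V a)) by (apply Rmult_le_compat_r; lra). lra. Qed.

Lemma LS_char V t : in_classV V -> 0 <= t ->
  (forall a b I, 0 < a -> a <= b -> SW (fexp t) V a b I -> I <= laplace V t) /\
  (forall e, 0 < e -> exists a b I, 0 < a /\ a <= b /\ SW (fexp t) V a b I /\ laplace V t - e < I).
Proof. intros HcV Ht. pose proof (classV_mono V HcV) as HV.
  set (E := fun s => exists a b, 0 < a /\ a <= b /\ SW (fexp t) V a b s).
  assert (HE : bound E).
  { destruct (SW_bounded V t HcV Ht) as [C HC]. exists C. intros s [a [b [h1 [h2 h3]]]]. eauto. }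
  assert (HE2 : exists s, E s).
  { destruct (SW_ex (fexp t) V 1 1 ltac:(lra) ltac:(lra) HV (fexp_fdec t Ht)) as [I HI]. exists I, 1, 1. split; [lra | split; [lra | exact HI]]. }
  destruct (completeness E HE HE2) as [JJ [Hub Hlub]].
  assert (P1 : forall a b I, 0 < a -> a <= b -> SW (fexp t) V a b I -> I <= JJ).
  { intros a b I h1 h2 h3. apply Hub. exists a, b; auto. }
  assert (P2 : forall e, 0 < e -> exists a b I, 0 < a /\ a <= b /\ SW (fexp t) V a b I /\ JJ - e < I).
  { intros e He. apply NNPP. intros Hn. assert (JJ <= JJ - e); [|lra].
    apply Hlub. intros s [a [b [h1 [h2 h3]]]]. destruct (Rle_dec s (JJ - e)); auto.
    exfalso. apply Hn. exists a, b, s. split; [auto | split; [auto | split; [exact h3 | lra]]]. }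
  assert (Hint : forall a b, 0 < a -> a <= b -> exists I, SW (fexp t) V a b I /\ is_RS_integral (fexp t) V a b I).
  { intros a b Ha Hab. destruct (SW_ex (fexp t) V a b Ha Hab HV (fexp_fdec t Ht)) as [I HI].
    exists I. split; auto. eapply SW_RS; eauto. apply fexp_fdec; auto. apply fexp_flip; auto. }
  assert (Hls : is_LS_integral_pos (fexp t) V JJ).
  { intros e He. destruct (P2 e He) as [a0 [b0 [I0 [h1 [h2 [h3 h4]]]]]].
    exists a0, b0. split; auto. intros a b Ha Hb Hab.
    destruct (Hint a b ltac:(lra) ltac:(lra)) as [I [HI HRS]].
    exists I. split; auto.
    assert (I0 <= I) by (apply (SW_interval t V a0 b0 a b I0 I); auto; lra).
    assert (I <= JJ) by (apply (P1 a b); auto; lra).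
    apply Rabs_def1; lra. }
  assert (Huniq : forall J, is_LS_integral_pos (fexp t) V J -> J = JJ).
  { intros J HJ. apply Rle_antisym; apply Rle_plus_epsilon; intros e He;
    (destruct (HJ (e/2) ltac:(lra)) as [d [B [hd HJ']]];
     destruct (P2 (e/2) ltac:(lra)) as [a0 [b0 [I0 [h1 [h2 [h3 h4]]]]]];
     set (a := Rmin d a0 / 2); set (b := Rmax B b0 + 1);
     assert (ha : 0 < a) by (unfold a; assert (0 < Rmin d a0) by (apply Rmin_glb_lt; lra); lra);
     assert (ha1 : a < d) by (unfold a; pose proof (Rmin_l d a0); lra);
     assert (ha2 : a < a0) by (unfold a; pose proof (Rmin_r d a0); lra);
     assert (hb1 : B < b) by (unfold b; pose proof (Rmax_l B b0); lra);
     assert (hb2 : b0 <= b) by (unfold b; pose proof (Rmax_r B b0); lra);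
     destruct (HJ' a b (conj ha ha1) hb1 ltac:(lra)) as [I' [HI' hI']];
     destruct (Hint a b ha ltac:(lra)) as [I [HI HRS]];
     assert (I' = I) by (apply (RS_unique (fexp t) V a b); auto; lra); subst I';
     assert (I0 <= I) by (apply (SW_interval t V a0 b0 a b I0 I); auto; lra);
     assert (I <= JJ) by (apply (P1 a b); auto; lra);
     revert hI'; unfold Rabs; destruct Rcase_abs; lra). }
  assert (Hlap : laplace V t = JJ).
  { apply Huniq. unfold laplace. apply epsilon_spec.
    exists JJ. exact Hls. }
  rewrite Hlap. split; auto. Qed.

Lemma L_nonneg V t : in_classV V -> 0 <= t -> 0 <= laplace V t.
Proof. intros HcV Ht. destruct (LS_char V t HcV Ht) as [H1 _].
  destruct (SW_ex (fexp t) V 1 1 ltac:(lra) ltac:(lra) (classV_mono V HcV) (fexp_fdec t Ht)) as [I HI].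
  pose proof (H1 1 1 I ltac:(lra) ltac:(lra) HI).
  pose proof (SW_nonneg t V 1 1 I Ht ltac:(lra) ltac:(lra) (classV_mono V HcV) HI). lra. Qed.

Lemma L_mono V s t : in_classV V -> 0 <= s <= t -> laplace V t <= laplace V s.
Proof. intros HcV Hst. pose proof (classV_mono V HcV) as HV.
  destruct (LS_char V t HcV ltac:(lra)) as [_ Ht].
  destruct (LS_char V s HcV ltac:(lra)) as [Hs _].
  apply Rle_plus_epsilon. intros e He. destruct (Ht e He) as [a [b [I [h1 [h2 [h3 h4]]]]]].
  destruct (SW_ex (fexp s) V a b h1 h2 HV (fexp_fdec s ltac:(lra))) as [Is HIs].
  pose proof (SW_tmono s t V a b I Is Hst h1 h2 HV h3 HIs).
  pose proof (Hs a b Is h1 h2 HIs). lra. Qed.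

Lemma L_cs V x z : in_classV V -> 0 <= x -> 0 <= z ->
  laplace V ((x+z)/2) * laplace V ((x+z)/2) <= laplace V x * laplace V z.
Proof. intros HcV Hx Hz. pose proof (classV_mono V HcV) as HV.
  assert (Hy : 0 <= (x+z)/2) by lra.
  destruct (LS_char V x HcV Hx) as [A1 B1].
  destruct (LS_char V ((x+z)/2) HcV Hy) as [A2 B2].
  destruct (LS_char V z HcV Hz) as [A3 B3].
  apply approx3. intros e He.
  destruct (B1 e He) as [a1 [b1 [I1 [h11 [h12 [h13 h14]]]]]].
  destruct (B2 e He) as [a2 [b2 [I2 [h21 [h22 [h23 h24]]]]]].
  destruct (B3 e He) as [a3 [b3 [I3 [h31 [h32 [h33 h34]]]]]].
  set (a := Rmin a1 (Rmin a2 a3)). set (b := Rmax b1 (Rmax b2 b3)).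
  assert (ha : 0 < a) by (unfold a; repeat apply Rmin_glb_lt; auto).
  assert (ha1 : a <= a1 /\ a <= a2 /\ a <= a3) by (unfold a, Rmin; repeat destruct Rle_dec; lra).
  assert (hb1 : b1 <= b /\ b2 <= b /\ b3 <= b) by (unfold b, Rmax; repeat destruct Rle_dec; lra).
  assert (hab : a <= b) by lra.
  destruct (SW_ex (fexp x) V a b ha hab HV (fexp_fdec x Hx)) as [J1 S1].
  destruct (SW_ex (fexp ((x+z)/2)) V a b ha hab HV (fexp_fdec _ Hy)) as [J2 S2].
  destruct (SW_ex (fexp z) V a b ha hab HV (fexp_fdec z Hz)) as [J3 S3].
  assert (I1 <= J1) by (apply (SW_interval x V a1 b1 a b I1 J1); auto; lra).
  assert (I2 <= J2) by (apply (SW_interval ((x+z)/2) V a2 b2 a b I2 J2); auto; lra).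
  assert (I3 <= J3) by (apply (SW_interval z V a3 b3 a b I3 J3); auto; lra).
  pose proof (A1 a b J1 ha hab S1). pose proof (A2 a b J2 ha hab S2). pose proof (A3 a b J3 ha hab S3).
  exists J2, J1, J3. split; [|split; [|split]]; try (apply Rabs_def1; lra).
  apply (SW_cs x z V a b); auto. Qed.

Lemma two_pow_ge1 k : (1 <= 2 ^ k)%nat.
Proof. induction k; simpl; lia. Qed.

Lemma pow_strict u v n : 0 <= u < v -> u ^ (S n) < v ^ (S n).
Proof. intros H. simpl. assert (u ^ n <= v ^ n) by (apply pow_incr; lra).
  assert (0 < v ^ n) by (apply pow_lt; lra).
  assert (u * u ^ n <= u * v ^ n) by (apply Rmult_le_compat_l; lra).
  assert (u * v ^ n < v * v ^ n) by (apply Rmult_lt_compat_r; lra). lra. Qed.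

Lemma pow_strict' u v n : 0 <= u -> 0 <= v -> (1 <= n)%nat -> u ^ n < v ^ n -> u < v.
Proof. intros Hu Hv Hn H. destruct (Rlt_dec u v); auto. exfalso.
  assert (v ^ n <= u ^ n) by (apply pow_incr; lra). lra. Qed.

Lemma INR_lt_pow2 k : INR k < 2 ^ k.
Proof. induction k. simpl; lra. rewrite S_INR. simpl. pose proof (pow_R1_Rle 2 k ltac:(lra)). lra. Qed.

Lemma pow2_big r : exists k, r <= 2 ^ k.
Proof. destruct (archimed_cor1 (1 / (Rabs r + 1))) as [N [HN HN0]].
  { apply Rdiv_lt_0_compat; [lra | pose proof (Rabs_pos r); lra]. }
  exists N. pose proof (INR_lt_pow2 N). assert (0 < INR N) by (apply lt_0_INR; lia).
  assert (Rabs r + 1 < INR N).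
  { pose proof (Rabs_pos r).
    apply (Rmult_lt_compat_l (INR N * (Rabs r + 1))) in HN; [|apply Rmult_lt_0_compat; lra].
    replace (INR N * (Rabs r + 1) * / INR N) with (Rabs r + 1) in HN by (field; lra).
    replace (INR N * (Rabs r + 1) * (1 / (Rabs r + 1))) with (INR N) in HN by (field; lra). lra. }
  pose proof (Rle_abs r). lra. Qed.

Lemma dyadic (L : R -> R) x z : (forall u, 0 <= u -> 0 <= L u) ->
  (forall u v, 0 <= u -> 0 <= v -> L ((u+v)/2) * L ((u+v)/2) <= L u * L v) -> 0 <= x <= z ->
  forall k, L (x + (z - x) / 2 ^ k) ^ (2 ^ k)%nat <= L x ^ (2 ^ k - 1)%nat * L z.
Proof. intros H0 Hcs Hxz. induction k.
  - simpl. replace (x + (z - x) / 1) with z by field. lra.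
  - assert (h2k : 0 < 2 ^ k) by (apply pow_lt; lra).
    set (p := x + (z - x) / 2 ^ k) in *.
    assert (hp : x <= p <= z).
    { unfold p. split. assert (0 <= (z - x) / 2 ^ k) by (apply Rmult_le_pos; [lra | left; apply Rinv_0_lt_compat; lra]). lra.
      assert ((z - x) / 2 ^ k <= (z - x)).
      { unfold Rdiv. replace (z - x) with ((z-x) * 1) at 2 by ring. apply Rmult_le_compat_l. lra.
        rewrite <- Rinv_1. apply Rinv_le_contravar. lra. apply pow_R1_Rle; lra. }
      lra. }
    replace (x + (z - x) / 2 ^ S k) with ((x + p) / 2) by (unfold p; simpl; field; lra).
    pose proof (two_pow_ge1 k) as hk.
    replace (2 ^ S k)%nat with (2 ^ k + 2 ^ k)%nat by (simpl; lia).
    replace (2 ^ k + 2 ^ k - 1)%nat with (2 ^ k + (2 ^ k - 1))%nat by lia.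
    rewrite !pow_add. rewrite <- Rpow_mult_distr.
    set (N := (2 ^ k)%nat) in *. set (q := L ((x + p) / 2)).
    assert (h1 : (q * q) ^ N <= (L x * L p) ^ N).
    { apply pow_incr. split. apply Rmult_le_pos; apply H0; lra. apply Hcs; lra. }
    rewrite !Rpow_mult_distr in h1.
    assert (0 <= L x ^ N) by (apply pow_le; apply H0; lra).
    assert (L x ^ N * L p ^ N <= L x ^ N * (L x ^ (N - 1) * L z)) by (apply Rmult_le_compat_l; auto).
    rewrite Rpow_mult_distr. lra.
Qed.

Lemma dy_point A B t T x z c k : 0 < A -> 0 < B -> 0 < t -> 0 < c -> A * t <= T -> 0 <= x -> x <= z -> z <= B * t ->
  2 * B / (A * c) <= 2 ^ k -> (z - x) / 2 ^ k <= c / 2 * T.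
Proof. intros HA HB Ht Hc HT Hx Hxz Hz Hk.
  assert (h2k : 0 < 2 ^ k) by (apply pow_lt; lra).
  assert (hAc : 0 < A * c) by (apply Rmult_lt_0_compat; auto).
  assert (h1 : 2 * B <= 2 ^ k * (A * c)).
  { apply (Rmult_le_compat_r (A * c)) in Hk; [|lra].
    replace (2 * B / (A * c) * (A * c)) with (2 * B) in Hk by (field; lra). lra. }
  assert (h2 : B * t <= 2 ^ k * (c / 2) * (A * t)).
  { replace (2 ^ k * (c / 2) * (A * t)) with ((2 ^ k * (A * c)) * t / 2) by field.
    apply (Rmult_le_compat_r t) in h1; lra. }
  assert (h3 : 2 ^ k * (c / 2) * (A * t) <= 2 ^ k * (c / 2) * T).
  { apply Rmult_le_compat_l; auto. apply Rmult_le_pos; lra. }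
  unfold Rdiv at 1. replace (c / 2 * T) with ((2 ^ k * (c / 2) * T) * / 2 ^ k) by (field; lra).
  apply Rmult_le_compat_r. left; apply Rinv_0_lt_compat; auto. lra. Qed.

Lemma pow_le1 u m : 0 <= u <= 1 -> u ^ m <= 1.
Proof. intros H. rewrite <- (pow1 m). apply pow_incr. lra. Qed.

Lemma pre_to_cut V : (forall n, in_classV (V n)) -> has_precutoff V ->
  exists T : nat -> R, (forall n, 0 < T n) /\
   (forall a, 1 < a -> Un_cv (fun n => laplace (V n) (a * T n)) 0) /\
   (forall a, 0 < a < 1 -> forall K, exists N, forall n, (N <= n)%nat -> K < laplace (V n) (a * T n)).
Proof.
  intros HV [t [Ht [A [B [HA [HAB [HB [c [Hc [N0 HN0]]]]]]]]]].
  assert (Lnn : forall n s, 0 <= s -> 0 <= laplace (V n) s) by (intros; apply L_nonneg; auto).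
  assert (Lmo : forall n s u, 0 <= s <= u -> laplace (V n) u <= laplace (V n) s) by (intros; apply L_mono; auto).
  assert (Lcs : forall n u v, 0 <= u -> 0 <= v -> laplace (V n) ((u+v)/2) * laplace (V n) ((u+v)/2) <= laplace (V n) u * laplace (V n) v) by (intros; apply L_cs; auto).
  set (h := Rmin c 1 / 2).
  assert (hh : 0 < h /\ h <= 1/2 /\ h < c) by (unfold h, Rmin; destruct Rle_dec; lra).
  set (E := fun n s => s <= A * t n \/ (A * t n <= s <= B * t n /\ h < laplace (V n) s)).
  assert (At_Bt : forall n, A * t n < B * t n) by (intros n; apply Rmult_lt_compat_r; auto).
  assert (Atpos : forall n, 0 < A * t n) by (intros n; apply Rmult_lt_0_compat; auto).
  assert (bd : forall n, bound (E n)).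
  { intros n. exists (B * t n). intros s [H|[H _]]. specialize (At_Bt n); lra. lra. }
  assert (ne : forall n, exists s, E n s) by (intros n; exists (A * t n); left; lra).
  set (T := fun n => proj1_sig (completeness (E n) (bd n) (ne n))).
  assert (HT : forall n, is_lub (E n) (T n)) by (intros n; exact (proj2_sig (completeness (E n) (bd n) (ne n)))).
  assert (T1 : forall n, A * t n <= T n <= B * t n).
  { intros n. destruct (HT n) as [H1 H2]. split. apply H1. left; lra.
    apply H2. intros s [H|[H _]]. specialize (At_Bt n); lra. lra. }
  assert (T2 : forall n s, T n < s <= B * t n -> laplace (V n) s <= h).
  { intros n s Hs. destruct (Rle_dec (laplace (V n) s) h) as [H|H]; auto. exfalso.
    destruct (HT n) as [H1 _]. assert (E n s). { right. specialize (T1 n). split; lra. }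
    specialize (H1 s H0). lra. }
  assert (T3 : forall n s, (N0 <= n)%nat -> 0 <= s < T n -> h < laplace (V n) s).
  { intros n s Hn Hs. destruct (HT n) as [H1 H2].
    assert (exists e, E n e /\ s < e).
    { apply NNPP. intros Hne. assert (T n <= s); [|lra]. apply H2. intros e He.
      destruct (Rle_dec e s); auto. exfalso. apply Hne. exists e. split; auto; lra. }
    destruct H as [e [[He|[He1 He2]] Hse]].
    - specialize (HN0 n Hn). pose proof (Lmo n s (A * t n) ltac:(lra)). lra.
    - pose proof (Lmo n s e ltac:(lra)). lra. }
  assert (Tpos : forall n, 0 < T n).
  { intros n. specialize (T1 n). specialize (Atpos n). lra. }
  assert (HB0 : 0 < B) by lra.
  exists T. split; auto. split.
  - intros a Ha eps Heps.
    set (eta := Rmin eps 1). assert (heta : 0 < eta <= 1 /\ eta <= eps) by (unfold eta, Rmin; destruct Rle_dec; lra).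
    destruct (pow2_big (2 * B / (A * (a - 1)))) as [k Hk].
    set (NN := (2 ^ k)%nat). pose proof (two_pow_ge1 k) as hNN.
    assert (hetaN : 0 < eta ^ NN) by (apply pow_lt; lra).
    destruct (HB (eta ^ NN) hetaN) as [N1 HN1].
    destruct (HB eta ltac:(lra)) as [N2 HN2].
    exists (Nat.max N0 (Nat.max N1 N2)). intros n Hn.
    specialize (HN1 n ltac:(lia)). specialize (HN2 n ltac:(lia)). unfold Rdist in *. cbv beta in *.
    rewrite Rminus_0_r in *.
    pose proof (T1 n) as [hT1 hT2]. pose proof (Tpos n) as hTn.
    assert (hz : 0 <= laplace (V n) (B * t n)) by (apply Lnn; lra).
    rewrite Rabs_right in HN1, HN2 by lra.
    assert (haT : T n <= a * T n) by nra.
    assert (hL : 0 <= laplace (V n) (a * T n)) by (apply Lnn; lra).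
    rewrite Rabs_right by lra.
    destruct (Rle_dec (B * t n) (a * T n)) as [hc|hc].
    + pose proof (Lmo n (B * t n) (a * T n) ltac:(lra)). lra.
    + set (x := (1 + a) / 2 * T n). set (z := B * t n) in *.
      assert (hx : T n < x < a * T n) by (unfold x; nra).
      assert (hLx : laplace (V n) x <= h) by (apply T2; unfold z in *; lra).
      pose proof (dyadic (laplace (V n)) x z (Lnn n) (Lcs n) ltac:(lra) k) as Hd.
      assert (hp1 : (z - x) / 2 ^ k <= (a - 1) / 2 * T n).
      { apply (dy_point A B (t n)); auto; unfold x, z in *; nra. }
      set (p := x + (z - x) / 2 ^ k) in *.
      assert (hp : x <= p <= a * T n).
      { unfold p. assert (0 <= (z - x) / 2 ^ k) by (apply Rmult_le_pos; [lra | left; apply Rinv_0_lt_compat, pow_lt; lra]).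
        unfold x in *. split; lra. }
      pose proof (Lmo n p (a * T n) ltac:(lra)).
      assert (laplace (V n) x ^ (NN - 1) <= 1) by (apply pow_le1; split; [apply Lnn|]; lra).
      assert (laplace (V n) x ^ (NN - 1) * laplace (V n) z <= 1 * laplace (V n) z) by (apply Rmult_le_compat_r; lra).
      assert (laplace (V n) p < eta).
      { apply (pow_strict' _ _ NN). apply Lnn; unfold p, x in *; lra. lra. unfold NN; lia. fold NN in Hd. lra. }
      lra.
  - intros a Ha K.
    set (K' := Rmax K 1). assert (hK : K <= K' /\ 1 <= K') by (unfold K', Rmax; destruct Rle_dec; lra).
    destruct (pow2_big (2 * B / (A * (1 - a)))) as [k Hk].
    set (NN := (2 ^ k)%nat). pose proof (two_pow_ge1 k) as hNN.
    assert (hKN : 0 < K' ^ (NN - 1)) by (apply pow_lt; lra).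
    set (c0 := h ^ NN / K' ^ (NN - 1)).
    assert (hc0 : 0 < c0) by (unfold c0; apply Rdiv_lt_0_compat; auto; apply pow_lt; lra).
    destruct (HB c0 hc0) as [N1 HN1].
    exists (Nat.max N0 N1). intros n Hn.
    specialize (HN1 n ltac:(lia)). unfold Rdist in *. cbv beta in *. rewrite Rminus_0_r in *.
    pose proof (T1 n) as [hT1 hT2]. pose proof (Tpos n) as hTn.
    assert (hz : 0 <= laplace (V n) (B * t n)) by (apply Lnn; lra).
    rewrite Rabs_right in HN1 by lra.
    destruct (Rlt_dec K' (laplace (V n) (a * T n))) as [hl|hl]; [lra|]. exfalso.
    set (x := a * T n) in *. set (z := B * t n) in *.
    assert (hx : 0 <= x < T n) by (unfold x; nra).
    assert (hLx : 0 <= laplace (V n) x) by (apply Lnn; lra).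
    pose proof (dyadic (laplace (V n)) x z (Lnn n) (Lcs n) ltac:(lra) k) as Hd.
    assert (hp1 : (z - x) / 2 ^ k <= (1 - a) / 2 * T n).
    { apply (dy_point A B (t n)); auto; unfold x, z in *; nra. }
    set (p := x + (z - x) / 2 ^ k) in *.
    assert (hp : x <= p < T n).
    { unfold p. assert (0 <= (z - x) / 2 ^ k) by (apply Rmult_le_pos; [lra | left; apply Rinv_0_lt_compat, pow_lt; lra]).
      unfold x in *. split; nra. }
    assert (hhp : h < laplace (V n) p) by (apply T3; [lia | lra]).
    assert (h ^ NN < laplace (V n) p ^ NN).
    { replace NN with (S (NN - 1)) by lia. apply pow_strict. lra. }
    assert (laplace (V n) x ^ (NN - 1) <= K' ^ (NN - 1)) by (apply pow_incr; lra).
    assert (laplace (V n) x ^ (NN - 1) * laplace (V n) z <= K' ^ (NN - 1) * laplace (V n) z) by (apply Rmult_le_compat_r; lra).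
    assert (K' ^ (NN - 1) * laplace (V n) z < K' ^ (NN - 1) * c0) by (apply Rmult_lt_compat_l; lra).
    assert (K' ^ (NN - 1) * c0 = h ^ NN) by (unfold c0; field; lra).
    fold NN in Hd. lra.
Qed.

Theorem theorem2p1 (V : nat -> R -> R) (M : ER) :
  (forall n, in_classV (V n)) ->
  is_limsup (fun n => laplace (V n) 0) M ->
  ER_pos M ->
  (has_precutoff V <-> has_cutoff V M).
Proof.
  intros HV Hls HM. split.
  - intros Hpre. destruct (pre_to_cut V HV Hpre) as [T [HT [H1 H2]]].
    assert (HMP : M = PInf).
    { destruct M as [l| |]; auto; [|contradiction].
      exfalso. destruct (Hls 1 ltac:(lra)) as [_ [N1 HN1]].
      destruct (H2 (1/2) ltac:(lra) (l + 1)) as [N2 HN2].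
      specialize (HN1 (Nat.max N1 N2) ltac:(lia)). specialize (HN2 (Nat.max N1 N2) ltac:(lia)).
      pose proof (L_mono (V (Nat.max N1 N2)) 0 (1/2 * T (Nat.max N1 N2)) (HV _)
        ltac:(pose proof (HT (Nat.max N1 N2)); lra)).
      cbv beta in *. lra. }
    subst M. exists T. split; [auto|split; [auto| intros a Ha; exact (H2 a Ha)]].
  - intros [t [Ht [H1 H2]]]. exists t. split; auto. exists (1/2), 2. split; [lra|]. split; [lra|].
    split. apply H1; lra.
    specialize (H2 (1/2) ltac:(lra)). destruct M as [l| |]; simpl in HM, H2; [| |contradiction].
    + exists (l / 2). split; [lra|]. destruct (H2 (l/2) ltac:(lra)) as [N HN]. exists N. intros n Hn.
      specialize (HN n Hn). unfold Rdist in HN. revert HN. unfold Rabs; destruct Rcase_abs; lra.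
    + exists 1. split; [lra|]. destruct (H2 1) as [N HN]. exists N. intros n Hn. apply HN; auto.
Qed.
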